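(* Let $\lambda>0$ and $g_l^*>0$. Let $I$ be a finite instance set with real gradients $g_i$, and let $I_f=\{i\in I: |g_i|>g_l^*\}$ and $I_f^c=I\setminus I_f$; assume $I_f\neq\emptyset$. Let $p=\frac{|I_f|}{|I|}$ and $\bar g_f=\frac{\sum_{i\in I_f}g_i}{|I_f|}$. With the leaf value $V(J)=-\frac{\sum_{i\in J}g_i}{|J|+\lambda}$ for finite sets $J$, define $\xi_I=|V(I)-V(I_f^c)|$. Then $\xi_I\le p\,(|\bar g_f|+g_l^* )$.
   Context: $I_f$ is the set of instances removed by gradient-based data filtering with threshold $g_l^*$ (instances whose gradient has absolute value exceeding $g_l^*$), and $I_f^c$ is the set of remaining instances. *)

(* Defs.v *)
From mathcomp Require Import all_boot all_order all_algebra.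
Set Implicit Arguments. Unset Strict Implicit. Unset Printing Implicit Defensive.
Import Order.TTheory GRing.Theory Num.Theory.
Local Open Scope ring_scope.

Definition leaf_value (R : realFieldType) (T : finType) (g : T -> R)
  (lambda : R) (J : {set T}) : R :=
  - (\sum_(i in J) g i) / (#|J|%:R + lambda).

Definition filtered_set (R : realFieldType) (T : finType) (g : T -> R)
  (gl : R) (I : {set T}) : {set T} :=
  [set i in I | gl < `|g i|].

(* Main.v *)
From mathcomp Require Import all_boot all_order all_algebra.
Require Import Defs.
From mathcomp Require Import ring lra.
Import Order.TTheory GRing.Theory Num.Theory.
Local Open Scope ring_scope.
Lemma key (R : realFieldType) (a b k m l gl : R) :
  0 < k -> 0 <= m -> 0 < l -> `|b| <= m * gl -> 0 < gl ->
  `|-(a+b)/(k+m+l) - -b/(m+l)| <= k/(k+m) * (`|a/k| + gl).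
Proof.
move=> k0 m0 l0 hb g0.
have D0 : 0 < k+m+l by lra.
have M0 : 0 < m+l by lra.
have K0 : 0 < k+m by lra.
have E: -(a+b)/(k+m+l) - -b/(m+l) = -a/(k+m+l) + b*k/((m+l)*(k+m+l)).
  by field; apply/andP; split; rewrite gt_eqF.
rewrite E; apply: le_trans (ler_normD _ _) _.
rewrite [X in _ <= X]mulrDr; apply: lerD.
  rewrite normrM normrN normrV ?unitfE ?gt_eqF // (gtr0_norm D0).
  rewrite normrM normrV ?unitfE ?gt_eqF // (gtr0_norm k0).
  have -> : k/(k+m)*(`|a|/k) = `|a|/(k+m) by field; apply/andP; split; rewrite gt_eqF.
  apply: ler_wpM2l; first exact: normr_ge0.
  by rewrite lef_pV2 ?posrE //; lra.
rewrite normrM normrV ?unitfE ?mulf_neq0 ?gt_eqF // normrM (gtr0_norm k0).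
rewrite (gtr0_norm (mulr_gt0 M0 D0)).
have -> : `|b| * k / ((m + l) * (k + m + l)) = (`|b| / (m+l)) * (k / (k+m+l)).
  by field; apply/andP; split; rewrite gt_eqF.
have h1 : `|b| / (m+l) <= gl.
  rewrite ler_pdivrMr //; nra.
have h2 : k / (k+m+l) <= k / (k+m).
  apply: ler_wpM2l; first lra.
  by rewrite lef_pV2 ?posrE //; lra.
rewrite [X in _ <= X]mulrC; apply: ler_pM => //; first by apply: divr_ge0; [exact: normr_ge0| lra].
by apply: divr_ge0; lra.
Qed.

Theorem theorem5 (R : realFieldType) (T : finType) (g : T -> R)
  (lambda gl : R) (I : {set T}) :
  0 < lambda -> 0 < gl ->
  filtered_set g gl I != set0 ->
  let If := filtered_set g gl I in
  let Ifc := I :\: If in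
  let p := #|If|%:R / #|I|%:R in
  let gbar := (\sum_(i in If) g i) / #|If|%:R in
  `|leaf_value g lambda I - leaf_value g lambda Ifc| <= p * (`|gbar| + gl).
Proof.
move=> l0 g0 ne; cbv zeta.
set If := filtered_set g gl I in ne *.
set Ifc := I :\: If.
have sub : If \subset I by apply/subsetP => i; rewrite inE => /andP[].
have IIf : I :&: If = If by apply/setIidPr.
have hcard : #|I| = (#|If| + #|Ifc|)%N by rewrite -(cardsID If I) IIf.
have sum : \sum_(i in I) g i = \sum_(i in If) g i + \sum_(i in Ifc) g i
  by rewrite (big_setID If) /= IIf.
have hb : `|\sum_(i in Ifc) g i| <= #|Ifc|%:R * gl.
  apply: le_trans (ler_norm_sum _ _ _) _.
  rewrite mulr_natl -sumr_const; apply: ler_sum => i.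
  rewrite /Ifc /If /filtered_set !inE.
  by case: (i \in I) => //=; rewrite andbT -leNgt.
have k0 : 0 < #|If|%:R :> R.
  by rewrite ltr0n card_gt0.
rewrite /leaf_value sum.
have -> : #|I|%:R = #|If|%:R + #|Ifc|%:R :> R by rewrite hcard natrD.
apply: key => //; exact: ler0n.
Qed.
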